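(* A fractional linear transformation $T$ of $\widehat{\mathbb H}$ satisfies $T(0)=0$, $T(1)=1$ and $T(\infty)=\infty$ if and only if there is $a\in\mathbb H^\times$ with $T(q)=aqa^{-1}$ for all $q$.
   Context: $\mathbb H$ denotes the quaternions, $\mathbb H^\times=\mathbb H\setminus\{0\}$, $\widehat{\mathbb H}=\mathbb H\cup\{\infty\}$. A fractional linear transformation of $\widehat{\mathbb H}$ is a map $q\mapsto(aq+b)(cq+d)^{-1}$ with $\begin{pmatrix}a&b\\c&d\end{pmatrix}\in GL(2,\mathbb H)$. *)

(* Defs.v *)
From HB Require Import structures.
From mathcomp Require Import all_boot all_order all_algebra.
From mathcomp Require Import reals.
Set Implicit Arguments. Unset Strict Implicit. Unset Printing Implicit Defensive.
Import Order.TTheory GRing.Theory Num.Theory.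
Local Open Scope ring_scope.

(* The real quaternions  x0 + x1 i + x2 j + x3 k  with i^2=j^2=k^2=ijk=-1. *)
Record quat (R : realType) := Quat { q0 : R; q1 : R; q2 : R; q3 : R }.
Arguments Quat {R}.

Definition quat_to4 (R : realType) (q : quat R) : R * R * R * R :=
  (q0 q, q1 q, q2 q, q3 q).
Definition quat_of4 (R : realType) (x : R * R * R * R) : quat R :=
  let: (a, b, c, d) := x in Quat a b c d.
Lemma quat_to4K (R : realType) : cancel (@quat_to4 R) (@quat_of4 R).
Proof. by case. Qed.
HB.instance Definition _ (R : realType) :=
  Equality.copy (quat R) (can_type (@quat_to4K R)).

Section QuatOps.
Variable R : realType.
Implicit Types p q : quat R.

Definition qzero : quat R := Quat 0 0 0 0.
Definition qone  : quat R := Quat 1 0 0 0.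
Definition qadd p q : quat R :=
  Quat (q0 p + q0 q) (q1 p + q1 q) (q2 p + q2 q) (q3 p + q3 q).
Definition qmul p q : quat R :=
  Quat (q0 p * q0 q - q1 p * q1 q - q2 p * q2 q - q3 p * q3 q)
       (q0 p * q1 q + q1 p * q0 q + q2 p * q3 q - q3 p * q2 q)
       (q0 p * q2 q - q1 p * q3 q + q2 p * q0 q + q3 p * q1 q)
       (q0 p * q3 q + q1 p * q2 q - q2 p * q1 q + q3 p * q0 q).
Definition qnorm2 p : R := q0 p ^+ 2 + q1 p ^+ 2 + q2 p ^+ 2 + q3 p ^+ 2.
(* multiplicative inverse  conj(p)/|p|^2  (only meaningful for p <> 0) *)
Definition qinv p : quat R :=
  let n := qnorm2 p in
  Quat (q0 p / n) (- q1 p / n) (- q2 p / n) (- q3 p / n).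
End QuatOps.

(* The extended quaternions  \hat H = H ∪ {∞}:  Some q = q,  None = ∞. *)
Definition hatH (R : realType) := option (quat R).

(* Quaternionic 2x2 matrices [[a, b], [c, d]] are given by their four entries.
   The matrix lies in GL(2,H) iff it has a two-sided inverse. *)
Definition mat2_mul (R : realType) (M N : quat R * quat R * quat R * quat R)
  : quat R * quat R * quat R * quat R :=
  let: (a, b, c, d) := M in let: (a', b', c', d') := N in
  (qadd (qmul a a') (qmul b c'), qadd (qmul a b') (qmul b d'),
   qadd (qmul c a') (qmul d c'), qadd (qmul c b') (qmul d d')).

Definition mat2_id (R : realType) : quat R * quat R * quat R * quat R :=
  (qone R, qzero R, qzero R, qone R).

Definition inGL2 (R : realType) (a b c d : quat R) : Prop :=
  exists N, mat2_mul (a, b, c, d) N = mat2_id R /\ mat2_mul N (a, b, c, d) = mat2_id R.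

(* The map q |-> (aq+b)(cq+d)^{-1} on \hat H, with the usual conventions:
   value ∞ where cq+d = 0, and ∞ |-> a c^{-1} if c <> 0, ∞ |-> ∞ if c = 0. *)
Definition flt_map (R : realType) (a b c d : quat R) (x : hatH R) : hatH R :=
  match x with
  | Some q =>
      let den := qadd (qmul c q) d in
      if den == qzero R :> quat R then None
      else Some (qmul (qadd (qmul a q) b) (qinv den))
  | None => if c == qzero R then None else Some (qmul a (qinv c))
  end.

Definition is_flt (R : realType) (T : hatH R -> hatH R) : Prop :=
  exists a b c d : quat R, inGL2 a b c d /\ forall x, T x = flt_map a b c d x.

(* Main.v *)
Require Import Defs.
From mathcomp Require Import all_boot all_order all_algebra.
From mathcomp Require Import reals.
From mathcomp Require Import ring.
Import Order.TTheory GRing.Theory Num.Theory.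
Local Open Scope ring_scope.
Set Implicit Arguments. Unset Strict Implicit.

Section Q.
Variable R : realType.
Implicit Types p q : quat R.

Lemma qnorm2_neq0 q : q <> qzero R -> qnorm2 q != 0.
Proof.
case: q => x0 x1 x2 x3 Hq; apply/negP => /eqP H; apply: Hq.
move/eqP: H; rewrite /qnorm2 /=.
rewrite !paddr_eq0 ?addr_ge0 ?sqr_ge0 // !sqrf_eq0.
by case/andP => /andP [] /andP [] /eqP -> /eqP -> /eqP -> /eqP ->.
Qed.

Lemma qmulV q : q <> qzero R -> qmul q (qinv q) = qone R.
Proof.
move=> Hq; have := qnorm2_neq0 Hq; case: q {Hq} => x0 x1 x2 x3.
rewrite /qinv /qmul /qone /qnorm2 /= => Hn; congr Quat; field; exact Hn.
Qed.

Lemma qVmul q : q <> qzero R -> qmul (qinv q) q = qone R.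
Proof.
move=> Hq; have := qnorm2_neq0 Hq; case: q {Hq} => x0 x1 x2 x3.
rewrite /qinv /qmul /qone /qnorm2 /= => Hn; congr Quat; field; exact Hn.
Qed.

Lemma qmulA p q r : qmul p (qmul q r) = qmul (qmul p q) r.
Proof. case: p q r => [? ? ? ?] [? ? ? ?] [? ? ? ?]; rewrite /qmul /=; congr Quat; ring. Qed.

Lemma qmul1r q : qmul (qone R) q = q.
Proof. case: q => *; rewrite /qmul /=; congr Quat; ring. Qed.
Lemma qmulr1 q : qmul q (qone R) = q.
Proof. case: q => *; rewrite /qmul /=; congr Quat; ring. Qed.
Lemma qmul0r q : qmul (qzero R) q = qzero R.
Proof. case: q => *; rewrite /qmul /=; congr Quat; ring. Qed.
Lemma qmulr0 q : qmul q (qzero R) = qzero R.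
Proof. case: q => *; rewrite /qmul /=; congr Quat; ring. Qed.
Lemma qadd0r q : qadd (qzero R) q = q.
Proof. case: q => *; rewrite /qadd /=; congr Quat; ring. Qed.
Lemma qaddr0 q : qadd q (qzero R) = q.
Proof. case: q => *; rewrite /qadd /=; congr Quat; ring. Qed.

Lemma qinv_neq0 q : q <> qzero R -> qinv q <> qzero R.
Proof.
move=> Hq H; have := qmulV Hq; rewrite H qmulr0 => /(congr1 (@q0 R)) /=.
by move/eqP; rewrite eq_sym oner_eq0.
Qed.

Lemma qmul_eq0 p q : q <> qzero R -> qmul p q = qzero R -> p = qzero R.
Proof.
move=> Hq H; rewrite -[p]qmulr1 -(qmulV Hq) qmulA H qmul0r //.
Qed.
End Q.

Theorem mainTheorem9 (R : realType) (T : hatH R -> hatH R) :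
  is_flt T ->
  ((T (Some (qzero R)) = Some (qzero R) /\ T (Some (qone R)) = Some (qone R)
    /\ T None = None)
   <-> exists a : quat R, a <> qzero R /\
         forall x : hatH R, T x = omap (fun q => qmul (qmul a q) (qinv a)) x).
Proof.
case=> a [b [c [d [_ HT]]]]; split.
- case=> H0 [H1 Hinf].
  move: Hinf; rewrite HT /=; case: eqP => // Hc _; subst c.
  move: H0 H1; rewrite !HT /= !qmul0r !qadd0r.
  case: eqP => // /eqP Hd; move/eqP: Hd => Hd.
  rewrite qmulr0 qadd0r => /(congr1 (odflt (qzero R))) /= /qmul_eq0 Hb.
  have Hb0 := Hb (qinv_neq0 Hd); subst b.
  rewrite qmulr1 qaddr0 => /(congr1 (odflt (qzero R))) /= Ha.
  have ad : a = d by rewrite -[a]qmulr1 -(qVmul Hd) qmulA Ha qmul1r.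
  subst a; exists d; split => // [[q|]]; rewrite HT /= ?eqxx //.
  rewrite qmul0r qadd0r qaddr0; case: eqP => //.
- case=> a' [Ha H]; split.
    rewrite H /=; congr Some; rewrite qmulr0; exact: qmul0r.
  split; last by rewrite H.
  rewrite H /=; congr Some; rewrite (qmulr1 a'); exact: qmulV.
Qed.
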